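(* Let $\mathscr{D}$ be a commutative variety, $L:X^{\circledast}\to Y$ a language, and $l,r:E\to X^{\circledast}$ its syntactic congruence. Let $e_L:X^{\circledast}\twoheadrightarrow \mathrm{Syn}(L)$ be the coequalizer of $l,r$ in $\mathbf{Mon}(\mathscr{D})$ (i.e. the quotient $X^{\circledast}/E$). Then there is a unique morphism $f_L:\mathrm{Syn}(L)\to Y$ in $\mathscr{D}$ with $L=f_L\cdot e_L$, and $(\mathrm{Syn}(L),e_L,f_L)$ is the syntactic $\mathscr{D}$-monoid of $L$: $e_L$ recognizes $L$ via $f_L$, and for every surjective $\mathscr{D}$-monoid morphism $e:X^{\circledast}\twoheadrightarrow M$ and morphism $f:M\to Y$ with $L=f\cdot e$ there is a (unique, surjective) $\mathscr{D}$-monoid morphism $h:M\to\mathrm{Syn}(L)$ with $e_L=h\cdot e$ (and then $f=f_L\cdot h$).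
   Context: A commutative variety $\mathscr{D}$ is a variety of finitary algebras in which for all $A,B$ the hom-set $\mathscr{D}(A,B)$ is a subalgebra $[A,B]$ of $B^{|A|}$; it has tensor products representing bimorphisms (maps homomorphic in each variable) and is symmetric monoidal closed. A $\mathscr{D}$-monoid is an algebra $M$ of $\mathscr{D}$ with a monoid structure $(|M|,\bullet,i)$ whose multiplication is a bimorphism; $\mathbf{Mon}(\mathscr{D})$ is the category of $\mathscr{D}$-monoids and homomorphisms that are both $\mathscr{D}$-morphisms and monoid morphisms. $X^{\circledast}$ is the free $\mathscr{D}$-monoid on a fixed object $X$; $Y$ is a fixed object. A language is a morphism $L:X^{\circledast}\to Y$. A $\mathscr{D}$-monoid morphism $e:X^{\circledast}\to M$ recognizes $L$ via $f:M\to Y$ if $L=f\cdot e$. The syntactic congruence of $L$ is $E=\{(u,v)\in|X^{\circledast}|^2\mid\forall x,y:\ L(x\bullet u\bullet y)=L(x\bullet v\bullet y)\}$, with projections $l,r:E\to X^{\circledast}$. The syntactic $\mathscr{D}$-monoid is the smallest $X$-generated $\mathscr{D}$-monoid (surjective $\mathscr{D}$-monoid morphism out of $X^{\circledast}$, ordered by factorization) recognizing $L$. *)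

(* Defs.v *)
From mathcomp Require Import all_boot.
Set Implicit Arguments. Unset Strict Implicit. Unset Printing Implicit Defensive.

Record signature := Signature { op :> Type; arity : op -> nat }.

Unset Implicit Arguments.
Inductive term (S : signature) : Type :=
| Var : nat -> term S
| App : forall o : op S, ('I_(arity o) -> term S) -> term S.

Set Implicit Arguments.
Record algebra (S : signature) := Algebra {
  carrier :> Type;
  interp : forall o : op S, ('I_(arity o) -> carrier) -> carrier }.

Fixpoint eval (S : signature) (A : algebra S) (v : nat -> A) (t : term S) : A :=
  match t with
  | Var n => v n
  | App o ts => @interp S A o (fun i => @eval S A v (ts i))
  end.

Record variety := Variety { vsig : signature; veqs : term vsig -> term vsig -> Prop }.

Definition in_variety (D : variety) (A : algebra (vsig D)) : Prop :=
  forall s t, @veqs D s t -> forall v : nat -> A, eval v s = eval v t.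

Definition is_hom (S : signature) (A B : algebra S) (f : A -> B) : Prop :=
  forall (o : op S) (args : 'I_(arity o) -> A),
    f (@interp S A o args) = @interp S B o (fun i => f (args i)).

(* Commutative variety: every hom-set D(A,B) is a subalgebra of B^|A|, i.e. closed
   under pointwise application of every operation. *)
Definition commutative_variety (D : variety) : Prop :=
  forall (A B : algebra (vsig D)), in_variety A -> in_variety B ->
  forall (o : op (vsig D)) (hs : 'I_(arity o) -> A -> B),
    (forall i, is_hom (hs i)) ->
    is_hom (fun a : A => @interp (vsig D) B o (fun i => hs i a)).

Record dmonoid (D : variety) := DMonoid {
  dm_alg :> algebra (vsig D);
  dm_mul : dm_alg -> dm_alg -> dm_alg;
  dm_one : dm_alg }.

Definition is_dmonoid (D : variety) (M : dmonoid D) : Prop :=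
  [/\ in_variety (dm_alg M),
      (forall a b c : M, dm_mul a (dm_mul b c) = dm_mul (dm_mul a b) c),
      (forall a : M, dm_mul (dm_one M) a = a),
      (forall a : M, dm_mul a (dm_one M) = a) &
      ((forall a : M, is_hom (dm_mul a)) /\
       (forall b : M, is_hom (fun a : M => dm_mul a b)))].

Definition is_mon_hom (D : variety) (M N : dmonoid D) (h : M -> N) : Prop :=
  [/\ is_hom h, h (dm_one M) = dm_one N &
      forall a b : M, h (dm_mul a b) = dm_mul (h a) (h b)].

Definition is_free_dmonoid (D : variety) (X : algebra (vsig D))
    (F : dmonoid D) (eta : X -> F) : Prop :=
  [/\ is_dmonoid F, is_hom eta &
      forall (M : dmonoid D), is_dmonoid M ->
      forall g : X -> M, is_hom g ->
      exists g' : F -> M,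
        [/\ is_mon_hom g', (forall x, g' (eta x) = g x) &
            forall g'' : F -> M, is_mon_hom g'' -> (forall x, g'' (eta x) = g x) ->
              forall w, g'' w = g' w]].

Definition syntactic_congruence (D : variety) (F : dmonoid D) (Y : Type)
    (L : F -> Y) (u v : F) : Prop :=
  forall x y : F, L (dm_mul (dm_mul x u) y) = L (dm_mul (dm_mul x v) y).

(* e : F -> S is a coequalizer in Mon(D) of the two projections l, r : E -> F
   of the relation E (unfolded: g . l = g . r  iff  g identifies all pairs of E). *)
Definition is_coequalizer_Mon (D : variety) (F S : dmonoid D)
    (E : F -> F -> Prop) (e : F -> S) : Prop :=
  [/\ is_dmonoid S, is_mon_hom e, (forall u v, E u v -> e u = e v) &
      forall (N : dmonoid D), is_dmonoid N ->
      forall g : F -> N, is_mon_hom g -> (forall u v, E u v -> g u = g v) ->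
      exists h : S -> N,
        [/\ is_mon_hom h, (forall w, g w = h (e w)) &
            forall h' : S -> N, is_mon_hom h' -> (forall w, g w = h' (e w)) ->
              forall s, h' s = h s]].

(* Main.v *)
Require Import Defs.
From mathcomp Require Import all_boot.
From Stdlib Require Import ClassicalEpsilon FunctionalExtensionality PropExtensionality ProofIrrelevance.
Set Implicit Arguments.
Unset Strict Implicit.


Definition rr (D : variety) (Xs : dmonoid D) (Y : Type) (L : Xs -> Y) (w : Xs) : Xs :=
  epsilon (inhabits (dm_one Xs)) (fun z => syntactic_congruence L z w).

Lemma syn_refl (D : variety) (Xs : dmonoid D) (Y : Type) (L : Xs -> Y) u : @syntactic_congruence D Xs Y L u u.
Proof. by move=> x y. Qed.
Lemma syn_sym (D : variety) (Xs : dmonoid D) (Y : Type) (L : Xs -> Y) u v : @syntactic_congruence D Xs Y L u v -> syntactic_congruence L v u.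
Proof. by move=> H x y; rewrite H. Qed.
Lemma syn_trans (D : variety) (Xs : dmonoid D) (Y : Type) (L : Xs -> Y) u v w : @syntactic_congruence D Xs Y L u v ->
  syntactic_congruence L v w -> syntactic_congruence L u w.
Proof. by move=> H1 H2 x y; rewrite H1 H2. Qed.

Lemma rr_spec (D : variety) (Xs : dmonoid D) (Y : Type) (L : Xs -> Y) w : syntactic_congruence L (@rr D Xs Y L w) w.
Proof. apply: (epsilon_spec _ (fun z => syntactic_congruence L z w)). exists w; exact: syn_refl. Qed.

Lemma rr_eq (D : variety) (Xs : dmonoid D) (Y : Type) (L : Xs -> Y) u v : syntactic_congruence L u v -> @rr D Xs Y L u = rr L v.
Proof.
move=> H; rewrite /rr; f_equal; apply: functional_extensionality => z.
apply: propositional_extensionality; split => Hz.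
- exact: syn_trans Hz H.
- exact: syn_trans Hz (syn_sym H).
Qed.

Lemma rr_idem (D : variety) (Xs : dmonoid D) (Y : Type) (L : Xs -> Y) w : @rr D Xs Y L (rr L w) = rr L w.
Proof. apply: rr_eq; exact: rr_spec. Qed.

Lemma syn_mull D (Xs : dmonoid D) Y (L : Xs -> Y) (hXs : is_dmonoid Xs) a u v :
  syntactic_congruence L u v -> syntactic_congruence L (dm_mul a u) (dm_mul a v).
Proof.
case: hXs => _ hA _ _ _ H x y; move: (H (dm_mul x a) y); by rewrite !hA.
Qed.
Lemma syn_mulr D (Xs : dmonoid D) Y (L : Xs -> Y) (hXs : is_dmonoid Xs) b u v :
  syntactic_congruence L u v -> syntactic_congruence L (dm_mul u b) (dm_mul v b).
Proof.
case: hXs => _ hA _ _ _ H x y; move: (H x (dm_mul b y)); by rewrite !hA.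
Qed.
Lemma syn_op D (Xs : dmonoid D) (Y : algebra (vsig D)) (L : Xs -> Y) (hXs : is_dmonoid Xs)
  (hL : is_hom L) o (us vs : 'I_(arity o) -> Xs) :
  (forall i, syntactic_congruence L (us i) (vs i)) ->
  syntactic_congruence L (@interp _ Xs o us) (@interp _ Xs o vs).
Proof.
case: hXs => _ _ _ _ [hl hr] H x y.
rewrite hl hr hL hl hr hL; f_equal; apply: functional_extensionality => i; exact: H.
Qed.


Definition QT (D : variety) (Xs : dmonoid D) (Y : Type) (L : Xs -> Y) : Type :=
  {w : Xs | rr L w = w}.

Definition gQ (D : variety) (Xs : dmonoid D) (Y : Type) (L : Xs -> Y) (w : Xs) : QT L :=
  exist _ (rr L w) (rr_idem L w).

Definition QI (D : variety) (Xs : dmonoid D) (Y : Type) (L : Xs -> Y)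
  (o : op (vsig D)) (args : 'I_(arity o) -> QT L) : QT L :=
  gQ L (@interp _ Xs o (fun i => proj1_sig (args i))).

Definition QA (D : variety) (Xs : dmonoid D) (Y : Type) (L : Xs -> Y) : algebra (vsig D) :=
  @Algebra (vsig D) (QT L) (@QI D Xs Y L).

Definition QM (D : variety) (Xs : dmonoid D) (Y : Type) (L : Xs -> Y) : dmonoid D :=
  @DMonoid D (QA L) (fun a b : QT L => gQ L (dm_mul (proj1_sig a) (proj1_sig b)))
     (gQ L (dm_one Xs)).

Lemma QT_inj (D : variety) (Xs : dmonoid D) (Y : Type) (L : Xs -> Y) (a b : QT L) :
  proj1_sig a = proj1_sig b -> a = b.
Proof. case: a b => [a pa] [b pb] /= E; subst b; f_equal; apply: proof_irrelevance. Qed.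

Lemma gQ_val (D : variety) (Xs : dmonoid D) (Y : Type) (L : Xs -> Y) (a : QT L) :
  gQ L (proj1_sig a) = a.
Proof. apply: QT_inj; case: a => a pa /=; exact: pa. Qed.

Lemma gQ_eq (D : variety) (Xs : dmonoid D) (Y : Type) (L : Xs -> Y) u v :
  syntactic_congruence L u v -> gQ L u = gQ L v.
Proof. move=> H; apply: QT_inj => /=; exact: rr_eq. Qed.

Lemma gQ_syn (D : variety) (Xs : dmonoid D) (Y : Type) (L : Xs -> Y) u v :
  gQ L u = gQ L v -> syntactic_congruence L u v.
Proof.
move=> H; have E : rr L u = rr L v by move: (f_equal (@proj1_sig _ _) H).
apply: syn_trans (syn_sym (rr_spec L u)) _; rewrite E; exact: rr_spec.
Qed.

Section QS.
Variables (D : variety) (Xs : dmonoid D) (Y : algebra (vsig D)) (L : Xs -> Y).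
Hypotheses (hXs : is_dmonoid Xs) (hL : is_hom L).

Lemma gQ_op o (args : 'I_(arity o) -> Xs) :
  gQ L (@interp _ Xs o args) = @interp _ (QM L) o (fun i => gQ L (args i)).
Proof.
apply: gQ_eq; apply: syn_op => // i /=; exact: syn_sym (rr_spec L _).
Qed.

Lemma gQ_mul u v : gQ L (dm_mul u v) = dm_mul (gQ L u : QM L) (gQ L v).
Proof.
apply: gQ_eq => /=.
apply: (@syn_trans _ _ _ L _ (dm_mul (rr L u) v)).
  exact: (syn_mulr hXs _ (syn_sym (rr_spec L u))).
exact: (syn_mull hXs _ (syn_sym (rr_spec L v))).
Qed.

Lemma gQ_one : gQ L (dm_one Xs) = dm_one (QM L).
Proof. by []. Qed.

Lemma gQ_eval (v : nat -> QM L) t :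
  eval v t = gQ L (eval (fun n => proj1_sig (v n)) t).
Proof.
elim: t => [n|o ts IH] /=; first by rewrite gQ_val.
rewrite gQ_op.
have -> : (fun i => eval v (ts i)) = (fun i => gQ L (eval (fun n => proj1_sig (v n)) (ts i))) by apply: functional_extensionality.
by [].
Qed.

Lemma QM_dmonoid : is_dmonoid (QM L).
Proof.
have hX := hXs; case: hX => hV hA h1l h1r [hl hr].
have E : forall a : QM L, a = gQ L (proj1_sig a) by move=> a; rewrite gQ_val.
have Eargs : forall (o : op (vsig D)) (args : 'I_(arity o) -> QM L),
  args = (fun i => gQ L (proj1_sig (args i))).
  move=> o args; extensionality i; by rewrite gQ_val.
split.
- move=> s t Hst v; rewrite !gQ_eval; f_equal; exact: hV.
- move=> a b c; rewrite (E a) (E b) (E c) -!gQ_mul hA //.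
- move=> a; rewrite (E a) -gQ_one -gQ_mul h1l //.
- move=> a; rewrite (E a) -gQ_one -gQ_mul h1r //.
- split.
  + move=> a o args; rewrite (E a) (Eargs o args) -gQ_op -gQ_mul hl gQ_op.
    f_equal; apply: functional_extensionality => i; by rewrite gQ_mul.
  + move=> b o args; rewrite (E b) (Eargs o args) -gQ_op -gQ_mul hr gQ_op.
    f_equal; apply: functional_extensionality => i; by rewrite gQ_mul.
Qed.

Lemma gQ_monhom : is_mon_hom (gQ L : Xs -> QM L).
Proof. split; [exact: gQ_op | exact: gQ_one | exact: gQ_mul]. Qed.

End QS.

Lemma monhom_comp (D : variety) (A B C : dmonoid D) (f : A -> B) (g : B -> C) :
  is_mon_hom f -> is_mon_hom g -> is_mon_hom (fun a => g (f a)).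
Proof.
case=> f1 f2 f3 [g1 g2 g3]; split.
- move=> o args; by rewrite f1 g1.
- by rewrite f2 g2.
- move=> a b; by rewrite f3 g3.
Qed.

Lemma monhom_id (D : variety) (A : dmonoid D) : is_mon_hom (fun a : A => a).
Proof. by split. Qed.

Definition sect (A B : Type) (a0 : A) (f : A -> B) (b : B) : A :=
  epsilon (inhabits a0) (fun a => f a = b).

Lemma sect_spec (A B : Type) (a0 : A) (f : A -> B) (b : B) :
  (exists a, f a = b) -> f (sect a0 f b) = b.
Proof. move=> H; exact: (epsilon_spec _ (fun a => f a = b) H). Qed.

Theorem mainTheorem8 (D : variety) (hD : commutative_variety D)
  (X Y : algebra (vsig D)) (hX : in_variety X) (hY : in_variety Y)
  (Xs : dmonoid D) (eta : X -> Xs) (hfree : is_free_dmonoid (F:=Xs) eta)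
  (L : Xs -> Y) (hL : is_hom L)
  (Syn : dmonoid D) (eL : Xs -> Syn)
  (hcoeq : is_coequalizer_Mon (F:=Xs) (S:=Syn) (syntactic_congruence L) eL) :
  exists fL : Syn -> Y,
    [/\ is_hom fL,
        (forall w, L w = fL (eL w)),
        (forall f' : Syn -> Y, is_hom f' -> (forall w, L w = f' (eL w)) ->
           forall s, f' s = fL s),
        (forall s : Syn, exists w, eL w = s) &
        forall (M : dmonoid D), is_dmonoid M ->
        forall (e : Xs -> M) (f : M -> Y),
          is_mon_hom e -> (forall m : M, exists w, e w = m) ->
          is_hom f -> (forall w, L w = f (e w)) ->
          exists h : M -> Syn,
            [/\ is_mon_hom h,
                (forall w, eL w = h (e w)),
                (forall h' : M -> Syn, is_mon_hom h' -> (forall w, eL w = h' (e w)) ->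
                   forall m, h' m = h m),
                (forall s : Syn, exists m, h m = s) &
                (forall m, f m = fL (h m))]].
Proof.
case: hfree => hXs _ _.
case: hcoeq => hSyn heL hE huniv.
have hXs' := hXs; case: hXs' => _ hA h1l h1r _.
have [hq [hqm hqe _]] := huniv _ (QM_dmonoid (L:=L) hXs hL) _ (gQ_monhom (L:=L) hXs hL) (@gQ_eq _ _ _ L).
have K : forall u v, eL u = eL v -> syntactic_congruence L u v.
  by move=> u v Huv; apply: (@gQ_syn _ _ _ L); rewrite !hqe Huv.
have KL : forall u v, eL u = eL v -> L u = L v.
  move=> u v /K H; move: (H (dm_one Xs) (dm_one Xs)); by rewrite !h1l !h1r.
pose k := fun q : QM L => eL (proj1_sig q).
have hk : is_mon_hom k.
  case: heL => e1 e2 e3; split.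
  - move=> o args; rewrite /k /= -e1; apply: hE; exact: rr_spec.
  - rewrite /k /= -e2; apply: hE; exact: rr_spec.
  - move=> a b; rewrite /k /= -e3; apply: hE; exact: rr_spec.
have [h0 [_ _ h0u]] := huniv _ hSyn _ heL hE.
have surj : forall s : Syn, exists w, eL w = s.
  move=> s; exists (proj1_sig (hq s)).
  have E1 := h0u _ (monhom_id Syn) (fun w => erefl).
  have E2 := h0u _ (monhom_comp hqm hk).
  have E3 : forall w, eL w = k (hq (eL w)).
    by move=> w; rewrite -hqe /k /=; apply: hE; apply: syn_sym; exact: rr_spec.
  by rewrite -/(k _) (E2 E3 s) -(E1 s).
pose sL := sect (dm_one Xs) eL.
have sLs : forall s, eL (sL s) = s by move=> s; apply: sect_spec.
exists (fun s => L (sL s)).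
have fLe : forall w, L w = L (sL (eL w)) by move=> w; apply: KL; rewrite sLs.
split => //.
- move=> o args; rewrite -hL; apply: KL.
  case: heL => e1 _ _; rewrite e1 sLs; f_equal; extensionality i; by rewrite sLs.
- move=> f' _ Hf' s; by rewrite -{1}(sLs s) -Hf'.
- move=> M hM e f he esurj hf Hf.
  pose sM := sect (dm_one Xs) e.
  have sMs : forall m, e (sM m) = m by move=> m; apply: sect_spec.
  have Ke : forall u v, e u = e v -> eL u = eL v.
    move=> u v Huv; apply: hE => x y.
    case: he => _ _ e3; by rewrite !Hf !e3 Huv.
  case: heL => e1 e2 e3.
  have he' := he; case: he' => m1 m2 m3.
  exists (fun m => eL (sM m)); split.
  + split.
    * move=> o args; rewrite -e1; apply: Ke; rewrite sMs m1; f_equal; extensionality i; by rewrite sMs.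
    * rewrite -e2; apply: Ke; by rewrite sMs m2.
    * move=> a b; rewrite -e3; apply: Ke; by rewrite sMs m3 !sMs.
  + move=> w; apply: Ke; by rewrite sMs.
  + move=> h' _ Hh' m; by rewrite -{1}(sMs m) -Hh'.
  + move=> s; have [w <-] := surj s; exists (e w); apply: Ke; by rewrite sMs.
  + move=> m; rewrite -{1}(sMs m) -Hf; apply: KL; by rewrite sLs.
Qed.
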